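(* On an $n$-node, $m$-edge undirected unweighted input graph, the construction described in the context runs in $\widetilde{O}(mn^{3/5})$ time with high probability.
   Context: Let $\mu=\lceil n^{2/5}\log^{1/5}n\rceil$. A node is heavy if its degree in $G$ is at least $\mu$, and light otherwise; an edge is heavy if at least one endpoint is heavy. $\Gamma_G(v)$ denotes the set consisting of $v$ and its neighbors. Construction of $H=(V,E')$: (1) $E'$ := all edges incident to light nodes. (2) Sample $S_1$ by including each node independently with probability $9\mu/n$; for each $x\in S_1$ add the edges of a BFS tree rooted at $x$ spanning $V$. (3) Sample $S_2$ by including each node independently with probability $1/\mu$; for each heavy node $x$ with $(\{x\}\cup\Gamma_G(x))\cap S_2=\varnothing$, add all edges incident to $x$. (4) For each heavy node $v\notin S_2$ with $\Gamma_G(v)\cap S_2\neq\varnothing$, choose arbitrarily one $x\in\Gamma_G(v)\cap S_2$ and add $(x,v)$. (5) For each $x_1\in S_2$, with $g=\mu^3/n+2$, assign weight $1+g^{-1}$ to every heavy edge and weight $1$ to every other edge, run Dijkstra's algorithm (with Fibonacci heaps) from $x_1$ to obtain minimum-weight paths $P(x_1,x_2)$ for all $x_2\in V$, and add the edges of $P(x_1,x_2)$ to $E'$ for every $x_2\in S_2$. $\widetilde{O}$ hides polylogarithmic factors; ''with high probability'' means with probability at least $1-1/n^c$ for some constant $c>0$. *)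

(* Defs.v *)
From mathcomp Require Import all_boot all_order all_algebra.
From mathcomp Require Import reals exp.
Set Implicit Arguments. Unset Strict Implicit. Unset Printing Implicit Defensive.
Import Order.TTheory GRing.Theory Num.Theory.
Local Open Scope ring_scope.

(* Graphs: vertex set 'I_n, edge relation e : rel 'I_n, assumed symmetric and
   irreflexive (undirected simple unweighted graph). *)
Section Graph.
Variable n : nat.
Variable e : rel 'I_n.

Definition nbrs (x : 'I_n) : {set 'I_n} := [set y | e x y].
Definition deg (x : 'I_n) : nat := #|nbrs x|.
Definition Gam (x : 'I_n) : {set 'I_n} := x |: nbrs x.
Definition nedges : nat := #|[set p : 'I_n * 'I_n | e p.1 p.2 & (p.1 < p.2)%N]|.
Definition gconnected : Prop := forall x y : 'I_n, connect e x y.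
End Graph.

Section Costs.
Variable R : realType.

Definition mu (n : nat) : nat :=
  `| Num.ceil (powR (n%:R : R) (2 / 5) * powR (ln (n%:R : R)) (1 / 5)) |%N.

(* sampling probabilities of S1 (9 mu / n, capped at 1) and S2 (1 / mu) *)
Definition p1 (n : nat) : R := Num.min 1 ((9 * mu n)%:R / n%:R).
Definition p2 (n : nat) : R := (mu n)%:R^-1.

Definition heavy (n : nat) (e : rel 'I_n) (x : 'I_n) : bool := (mu n <= deg e x)%N.

(* Unit-cost accounting of the construction of H, step by step, with the
   standard costs of its primitives on an n-node m-edge graph:
   - scanning the adjacency list of a node x: 1 + deg x;
   - one BFS from a root: n + m;
   - one Dijkstra run with Fibonacci heaps: m + n ln n;
   - adding the union of the minimum-weight paths P(x1,x2), x2 in S2, which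
     all lie in the shortest-path tree of x1: n. *)
Definition cost_step1 n (e : rel 'I_n) : R :=
  (\sum_(v : 'I_n) (1 + deg e v))%:R.
Definition cost_step2 n (e : rel 'I_n) (S1 : {set 'I_n}) : R :=
  #|S1|%:R * (n + nedges e)%:R.
Definition cost_step3 n (e : rel 'I_n) (S2 : {set 'I_n}) : R :=
  (\sum_(x : 'I_n | heavy e x) (1 + deg e x
       + (if [disjoint Gam e x & S2] then deg e x else 0)))%:R.
Definition cost_step4 n (e : rel 'I_n) (S2 : {set 'I_n}) : R :=
  (\sum_(v : 'I_n | heavy e v && (v \notin S2)) (1 + deg e v))%:R.
Definition cost_step5 n (e : rel 'I_n) (S2 : {set 'I_n}) : R :=
  #|S2|%:R * ((nedges e)%:R + n%:R * ln (n%:R : R) + n%:R).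

Definition cost n (e : rel 'I_n) (S1 S2 : {set 'I_n}) : R :=
  cost_step1 e + cost_step2 e S1 + cost_step3 e S2 + cost_step4 e S2
  + cost_step5 e S2.

Definition bern_set (n : nat) (p : R) (S : {set 'I_n}) : R :=
  p ^+ #|S| * (1 - p) ^+ (n - #|S|).

(* Probability of an event on (S1, S2), with S1 and S2 sampled independently
   as in steps (2) and (3). *)
Definition Pr_samples (n : nat) (E : {set 'I_n} -> {set 'I_n} -> bool) : R :=
  \sum_(S1 : {set 'I_n}) \sum_(S2 : {set 'I_n})
     (E S1 S2)%:R * (bern_set (p1 n) S1 * bern_set (p2 n) S2).
End Costs.

(* Main.v *)
Require Import Defs.
From mathcomp Require Import all_boot all_order all_algebra.
From mathcomp Require Import reals sequences exp.
From mathcomp Require Import ring lra zify.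
Import Order.TTheory GRing.Theory Num.Theory.
Local Open Scope ring_scope.


Lemma gen_sum (R : comNzRingType) (T : finType) (a b : R) :
  \sum_(S : {set T}) a ^+ #|S| * b ^+ (#|T| - #|S|) = (a + b) ^+ #|T|.
Proof.
have -> : (a + b) ^+ #|T| = \prod_(i : T) (a + b) by rewrite prodr_const.
rewrite bigA_distr.
apply: eq_bigr => J _.
rewrite (bigID (mem J)) /=.
rewrite (eq_bigr (fun=> a)); last by move=> i ->.
rewrite [X in _ = _ * X](eq_bigr (fun=> b)); last by move=> i /negbTE ->.
rewrite !prodr_const; congr (_ * _ ^+ _).
by rewrite -(cardC (mem J)) addKn; apply: eq_card => i; rewrite !inE.

Qed.


Section B.
Variable R : realType.

Lemma bern_gen n (p x : R) :
  \sum_(S : {set 'I_n}) bern_set p S * x ^+ #|S| = (p * x + (1 - p)) ^+ n.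
Proof.
rewrite -[in RHS](card_ord n) -gen_sum; apply: eq_bigr => S _.
by rewrite /bern_set card_ord mulrAC -exprMn.
Qed.

Lemma bern_sum1 n (p : R) : \sum_(S : {set 'I_n}) bern_set p S = 1.
Proof.
have := bern_gen n p 1; rewrite mulr1 addrC subrK expr1n => <-.
by apply: eq_bigr => S _; rewrite expr1n mulr1.
Qed.

Lemma bern_ge0 n (p : R) (S : {set 'I_n}) : 0 <= p <= 1 -> 0 <= bern_set p S.
Proof.
move=> /andP[p0 p1]; rewrite /bern_set mulr_ge0 // exprn_ge0 //.
by rewrite subr_ge0.
Qed.

Lemma expR_half_le2 : expR (1 / 2 : R) <= 2.
Proof.
have h := expR_ge1Dx (- (1 / 2) : R).
rewrite expRN in h.
have hp := expR_gt0 (1 / 2 : R).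
set y := expR (1/2) in h hp *.
have h2 : 1 / 2 <= y^-1 by lra.
rewrite -(invrK y) -[2](invrK (2:R)) lef_pV2 ?posrE ?invr_gt0 //; lra.
Qed.

Lemma tail n (p T : R) : 0 <= p <= 1 ->
  \sum_(S : {set 'I_n}) ((T < #|S|%:R)%R)%:R * bern_set p S <= expR (p * n%:R - T / 2).
Proof.
move=> hp.
set y := expR (1 / 2 : R).
apply: (@le_trans _ _ (\sum_(S : {set 'I_n}) expR (- (T / 2)) * (bern_set p S * y ^+ #|S|))).
  apply: ler_sum => S _.
  rewrite [X in _ <= X]mulrCA [X in X <= _]mulrC ler_wpM2l ?bern_ge0 //.
  rewrite /y -expRM_natl -expRD.
  case: ltrP => hT /=; first by rewrite mulr1n; apply: (le_trans _ (expR_ge1Dx _)); rewrite lerDl; lra.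
  by rewrite mulr0n expR_ge0.
rewrite -big_distrr /= bern_gen expRD mulrC ler_wpM2r ?expR_ge0 //.
rewrite expRM_natr.
have y2 : y <= 2 := expR_half_le2.
have /andP[p0 p1] := hp.
have y0 : 0 < y by rewrite /y expR_gt0.
apply: lerXn2r; rewrite ?nnegrE ?expR_ge0 //; first by nra.
apply: le_trans (expR_ge1Dx _). nra.
Qed.
End B.


Section C.
Variable R : realType.

Lemma powR_ge1 (x r : R) : 1 <= x -> 0 <= r -> 1 <= powR x r.
Proof.
move=> x1 r0; rewrite /powR gt_eqF ?(lt_le_trans ltr01) //.
apply: le_trans (expR_ge1Dx _); rewrite lerDl mulr_ge0 // ln_ge0 //.
Qed.

Lemma ln_ge1 (n : nat) : (4 <= n)%N -> 1 <= ln (n%:R : R).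
Proof.
move=> n4.
have e4 : expR (1 : R) <= 4.
  have h := expR_half_le2 R.
  have -> : (1 : R) = 2%:R * (1 / 2) by rewrite mul1r divff // pnatr_eq0.
  rewrite expRM_natl.
  apply: le_trans (lerXn2r 2 _ _ h) _; rewrite ?nnegrE ?expR_ge0 //.
  by rewrite expr2; lra.
rewrite -[X in X <= _](expRK 1) ler_ln ?posrE ?expR_gt0 //.
  by apply: le_trans e4 _; rewrite (ler_nat R 4 n).
by rewrite (ltr_nat R 0 n); apply: leq_trans n4.
Qed.

Lemma mu_bounds (n : nat) : (4 <= n)%N ->
  powR (n%:R : R) (2/5) <= (mu R n)%:R /\
  (mu R n)%:R <= powR (n%:R : R) (2/5) * ln (n%:R : R) + 1.
Proof.
move=> n4.
have L1 := @ln_ge1 n n4.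
have n1 : (1 : R) <= n%:R by rewrite (ler_nat R 1 n); apply: leq_trans n4.
set a := powR (n%:R : R) (2/5).
set b := powR (ln (n%:R : R)) (1/5).
have a1 : 1 <= a by apply: powR_ge1 => //; lra.
have b1 : 1 <= b by apply: powR_ge1 => //; lra.
have bL : b <= ln (n%:R : R) by apply: ler1_powR => //; lra.
have abge0 : 0 <= a * b by apply: mulr_ge0; lra.
have hmu : (mu R n)%:R = (Num.ceil (a * b))%:~R :> R.
  by rewrite /mu natr_absz -/a -/b ger0_norm // ceil_ge0; lra.
have [c1 c2] := andP (ceil_itv (a * b)).
rewrite hmu; split.
  apply: le_trans c2; rewrite ler_peMr //; lra.
rewrite intrD in c1.
have : a * b <= a * ln (n%:R : R) by rewrite ler_wpM2l //; lra.
move: c1; rewrite -[(-1)%:~R]/(-1) => c1; lra.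
Qed.

End C.

Local Close Scope ring_scope.

Lemma card_set_sum (T : finType) (P : pred T) : #|[set x | P x]| = \sum_x P x.
Proof.
rewrite -sum1_card big_mkcond /=; apply: eq_bigr => x _; rewrite inE.
by case: (P x).
Qed.

Lemma handshake n (e : rel 'I_n) : symmetric e -> irreflexive e ->
  \sum_v deg e v = 2 * nedges e.
Proof.
move=> sym irr.
have h1 : nedges e = \sum_x \sum_y (e x y && (x < y)%N).
  rewrite /nedges card_set_sum pair_big /=.
  by apply: eq_bigr => -[x y] _.
have h2 : nedges e = \sum_x \sum_y (e x y && (y < x)%N).
  rewrite h1 exchange_big /=; apply: eq_bigr => x _; apply: eq_bigr => y _.
  by rewrite sym.
rewrite mul2n -addnn {1}h1 h2 -big_split /=; apply: eq_bigr => x _.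
rewrite /deg /nbrs card_set_sum -big_split /=; apply: eq_bigr => y _.
case exy: (e x y) => //=.
have : x != y by apply/eqP => xy; move: exy; rewrite xy irr.
rewrite neq_ltn; case/orP => h; rewrite h.
  by rewrite ltnNge ltnW.
by rewrite ltnNge ltnW.
Qed.

Lemma deg_ge1 n (e : rel 'I_n) (v : 'I_n) : (2 <= n)%N -> gconnected e -> (1 <= deg e v)%N.
Proof.
move=> n2 conn.
have [w vw] : exists w, w != v.
  case: n n2 e v conn => [|[|n]] // _ e v _.
  case: (eqVneq v ord0) => [->|hv]; last by exists ord0; rewrite eq_sym.
  by exists ord_max.
have /connectP [p pth lst] := conn v w.
case: p pth lst => [|a p] /=; first by move=> _ wv; move: vw; rewrite -wv eqxx.
case/andP => eva _ _.
rewrite /deg card_gt0; apply/set0Pn; exists a; by rewrite inE.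
Qed.

Local Open Scope ring_scope.


Lemma pr_lb (R : realType) n (E : {set 'I_n} -> {set 'I_n} -> bool)
  (a b : {set 'I_n} -> bool) (w1 w2 : {set 'I_n} -> R) :
  (forall S, 0 <= w1 S) -> (forall S, 0 <= w2 S) ->
  \sum_S w1 S = 1 -> \sum_S w2 S = 1 ->
  (forall S1 S2, ~~ a S1 -> ~~ b S2 -> E S1 S2) ->
  1 - \sum_S (a S)%:R * w1 S - \sum_S (b S)%:R * w2 S <=
  \sum_S1 \sum_S2 (E S1 S2)%:R * (w1 S1 * w2 S2).
Proof.
move=> w10 w20 s1 s2 hE.
apply: (@le_trans _ _ (\sum_S1 \sum_S2 ((1 - (a S1)%:R) * w1 S1 * w2 S2
                                       - w1 S1 * ((b S2)%:R * w2 S2)))).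
  rewrite le_eqVlt; apply/orP; left; apply/eqP/esym.
  under eq_bigr => S1 _ do rewrite sumrB -!big_distrr /= s2 mulr1.
  rewrite sumrB -big_distrl /= s1 mul1r.
  under eq_bigr => S1 _ do rewrite mulrBl mul1r.
  by rewrite sumrB s1.
apply: ler_sum => S1 _; apply: ler_sum => S2 _.
have p12 := mulr_ge0 (w10 S1) (w20 S2).
have hb0 : 0 <= (b S2)%:R * w2 S2 by rewrite mulr_ge0.
have hE0 : 0 <= (E S1 S2)%:R * (w1 S1 * w2 S2) by rewrite mulr_ge0.
case: (boolP (a S1)) => ha; case: (boolP (b S2)) => hb /=; try nra.
by rewrite hE //= mul1r; nra.
Qed.


Lemma sum1_ord' n : (\sum_(i < n) 1 = n)%N.
Proof. by rewrite sum1_card card_ord. Qed.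

Lemma sum_1deg n (e : rel 'I_n) : symmetric e -> irreflexive e ->
  (\sum_v (1 + deg e v) = n + 2 * nedges e)%N.
Proof. by move=> s i; rewrite big_split /= sum1_ord' handshake. Qed.

Lemma cost134 (R : realType) n (e : rel 'I_n) (S2 : {set 'I_n}) : symmetric e -> irreflexive e ->
  (\sum_(x : 'I_n | heavy R e x) (1 + deg e x
       + (if [disjoint Gam e x & S2] then deg e x else 0))
   + \sum_(v : 'I_n | heavy R e v && (v \notin S2)) (1 + deg e v) + 
   \sum_v (1 + deg e v) <= 3 * n + 8 * nedges e)%N.
Proof.
move=> s i.
have h1 : (\sum_(x : 'I_n | heavy R e x) (1 + deg e x
       + (if [disjoint Gam e x & S2] then deg e x else 0)) <= n + 4 * nedges e)%N.
  apply: (@leq_trans (\sum_x (1 + deg e x + deg e x))).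
    rewrite big_mkcond /=; apply: leq_sum => x _.
    by case: ifP => _ //; case: ifP => _ //; rewrite addn0 leq_addr.
  rewrite big_split /= big_split /= sum1_ord' handshake //; lia.
have h2 : (\sum_(v : 'I_n | heavy R e v && (v \notin S2)) (1 + deg e v) <= n + 2 * nedges e)%N.
  rewrite -sum_1deg // big_mkcond /=; apply: leq_sum => x _.
  by case: ifP.
rewrite sum_1deg //.
lia.
Qed.


Theorem lemma9 (R : realType) :
  exists (C c : R) (k n0 : nat), 0 < C /\ 0 < c /\
    forall (n : nat) (e : rel 'I_n),
      (n0 <= n)%N -> symmetric e -> irreflexive e -> gconnected e ->
      1 - powR (n%:R : R) (- c) <=
      @Pr_samples R n (fun S1 S2 =>
        @cost R n e S1 S2 <= C * (nedges e)%:R * powR (n%:R : R) (3 / 5)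
                          * ln (n%:R : R) ^+ k).
Proof.
exists 200, 1, 2%N, 4%N; split; first lra; split; first lra.
move=> n e n4 sym irr conn.
have L1 := @ln_ge1 R n n4.
have n1 : (1 : R) <= n%:R by rewrite (ler_nat R 1 n); apply: leq_trans n4.
have n0 : (0 : R) < n%:R by lra.
have [aM Mb] := @mu_bounds R n n4.
set L := ln (n%:R : R) in L1 Mb *.
set a := powR (n%:R : R) (2/5) in aM Mb.
set q := powR (n%:R : R) (3/5).
set M := mu R n in aM Mb *.
set m := nedges e.
have aq : a * q = n%:R.
  rewrite /a /q -powRD; last by apply/implyP => _; rewrite gt_eqF.
  have -> : (2 / 5 + 3 / 5 : R) = 1 by field.
  by rewrite powRr1 // ltW.
have a1 : 1 <= a by apply: powR_ge1 => //; lra.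
have q1 : 1 <= q by apply: powR_ge1 => //; lra.
have aleq : a <= q by apply: ler_powR => //; lra.
have M1 : (1 : R) <= M%:R by lra.
have nm : n%:R <= 2 * (m%:R : R).
  have : (n <= 2 * m)%N.
    rewrite /m -handshake // -[X in (X <= _)%N]sum1_ord'.
    by apply: leq_sum => v _; apply: deg_ge1 => //; apply: leq_trans n4.
  by rewrite -(ler_nat R) natrM.
set P1 := p1 R n; set P2 := p2 R n.
have hp1 : 0 <= P1 <= 1.
  rewrite /P1 /p1 le_min ge_min lexx orTb andbT ler01 /=.
  by rewrite divr_ge0 // ler0n.
have P1n : P1 * n%:R <= 9 * M%:R.
  have hP : P1 <= (9 * M)%:R / n%:R by rewrite /P1 /p1 ge_min lexx orbT.
  by rewrite -ler_pdivlMr // -natrM.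
have hp2 : 0 <= P2 <= 1.
  rewrite /P2 /p2 invr_ge0 ler0n /= invf_le1 //; lra.
have P2n : P2 * n%:R <= q.
  rewrite /P2 /p2 mulrC ler_pdivrMr; last lra.
  rewrite -aq mulrC ler_wpM2l //; lra.
set T1 := 2 * (P1 * n%:R) + 4 * L.
set T2 := 2 * (P2 * n%:R) + 4 * L.
have hE : forall S1 S2 : {set 'I_n}, ~~ (T1 < #|S1|%:R) -> ~~ (T2 < #|S2|%:R) ->
   @cost R n e S1 S2 <= 200 * (m%:R) * q * L ^+ 2.
  move=> S1 S2; rewrite -!leNgt => h1 h2; rewrite /T1 in h1; rewrite /T2 in h2.
  have m0 : (0 : R) <= m%:R by rewrite ler0n.
  have L0 : 0 <= L by lra.
  have LL : L <= L ^+ 2 by rewrite expr2 ler_peMl //.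
  have f1 : a * L <= q * L ^+ 2 by apply: ler_pM => //; lra.
  have f2 : 1 <= q * L ^+ 2 by rewrite -[1]mul1r; apply: ler_pM => //; lra.
  have f3 : L <= q * L ^+ 2 by apply: le_trans LL _; rewrite ler_peMl ?exprn_ge0 //; lra.
  have f4 : q <= q * L by rewrite ler_peMr //; lra.
  have f5 : L <= q * L by rewrite ler_peMl //; lra.
  have f6 : n%:R * L <= 2 * m%:R * L by rewrite ler_wpM2r.
  have f7 : m%:R <= m%:R * L by rewrite ler_peMr.
  have f8 : m%:R <= m%:R * (q * L ^+ 2) by rewrite ler_peMr.
  have B2 : #|S1|%:R * (n + m)%:R <= (40 * (q * L ^+ 2)) * (3 * m%:R).
    apply: ler_pM; rewrite ?ler0n ?natrD //; lra.
  have B5 : #|S2|%:R * (m%:R + n%:R * L + n%:R) <= (6 * (q * L)) * (5 * (m%:R * L)).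
    apply: ler_pM; rewrite ?ler0n //; try lra.
    by apply: addr_ge0; [apply: addr_ge0|]; rewrite ?mulr_ge0 ?ler0n.
  have B134 := @cost134 R n e S2 sym irr.
  rewrite -(ler_nat R) !natrD in B134.
  rewrite /cost /cost_step1 /cost_step2 /cost_step3 /cost_step4 /cost_step5.
  have e5 : 6 * (q * L) * (5 * (m%:R * L)) = 30 * (m%:R * (q * L ^+ 2)) by rewrite expr2; ring.
  have e2 : 40 * (q * L ^+ 2) * (3 * m%:R) = 120 * (m%:R * (q * L ^+ 2)) by ring.
  have e0 : 200 * m%:R * q * L ^+ 2 = 200 * (m%:R * (q * L ^+ 2)) by ring.
  rewrite e0; rewrite e5 in B5; rewrite e2 in B2.
  rewrite -/L -/m; rewrite -/m in B134; lra.
rewrite /Pr_samples.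
have PL := (@pr_lb R n _ (fun S => (T1 < #|S|%:R)) (fun S => (T2 < #|S|%:R)) (bern_set P1) (bern_set P2)
  (fun S => @bern_ge0 R n P1 S hp1) (fun S => @bern_ge0 R n P2 S hp2) (@bern_sum1 R n P1) (@bern_sum1 R n P2) hE).
apply: le_trans PL.
have A1 := @tail R n P1 T1 hp1.
have A2 := @tail R n P2 T2 hp2.
have e1 : P1 * n%:R - T1 / 2 = - (2 * L) by rewrite /T1; field.
have e2 : P2 * n%:R - T2 / 2 = - (2 * L) by rewrite /T2; field.
rewrite e1 in A1; rewrite e2 in A2.
have ex : 2 * expR (- (2 * L)) <= expR (- L).
  have -> : - L = - (2 * L) + L by ring.
  rewrite expRD /L lnK ?posrE // mulrC ler_wpM2l ?expR_ge0 //.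
  by rewrite (ler_nat R 2 n); apply: leq_trans n4.
have -> : powR (n%:R : R) (- 1) = expR (- L) by rewrite /powR gt_eqF // mulN1r.
lra.
Qed.
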